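(* Let $\bm v_1,\dots,\bm v_N\in\mathbb{S}^{r-1}$ form a unit norm tight frame, let $\bm V\in\mathbb{R}^{r\times N}$ have the $\bm v_i$ as columns, $\bm X := \bm V^\top\bm V$, and suppose the matrices $\bm v_1\bm v_1^\top,\dots,\bm v_N\bm v_N^\top$ are linearly independent (equivalently, $\bm X^{\odot 2}$ is nonsingular). Let $$V'_{\mathrm{sym}} := \{\mathrm{vec}(\bm S\bm V):\bm S\in\mathbb{R}^{r\times r}_{\mathrm{sym}},\ \bm v_i^\top\bm S\bm v_i = 0\ \forall i\in[N]\}.$$ Then the orthogonal projection matrix $\bm P_{V'_{\mathrm{sym}}}\in\mathbb{R}^{rN\times rN}$ has blocks $$(\bm P_{V'_{\mathrm{sym}}})_{[ij]} = \frac{r}{N}\Big(\tfrac12\langle\bm v_i,\bm v_j\rangle\bm I_r + \tfrac12\bm v_j\bm v_i^\top - \sum_{k=1}^N\sum_{\ell=1}^N\big((\bm X^{\odot2})^{-1}\big)_{k\ell}\langle\bm v_i,\bm v_k\rangle\langle\bm v_j,\bm v_\ell\rangle\bm v_k\bm v_\ell^\top\Big).$$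
   Context: Unit vectors $\bm v_1,\dots,\bm v_N\in\mathbb{R}^r$ form a unit norm tight frame if $\sum_i\bm v_i\bm v_i^\top = \frac{N}{r}\bm I_r$. $\mathrm{vec}(\bm V) = (\bm v_1;\dots;\bm v_N)\in\mathbb{R}^{rN}$. $\bm X^{\odot 2}$ is the entrywise square of $\bm X$. Matrices in $\mathbb{R}^{rN\times rN}$ are viewed as $N\times N$ arrays of $r\times r$ blocks, $(i,j)$ block written $(\cdot)_{[ij]}$. *)

(* Defs.v *)
From HB Require Import structures.
From mathcomp Require Import all_boot all_order all_algebra.
Set Implicit Arguments. Unset Strict Implicit. Unset Printing Implicit Defensive.
Import Order.TTheory GRing.Theory Num.Theory.
Local Open Scope ring_scope.

Section Defs.
Variables (R : realFieldType) (r N : nat).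

Definition vcol (V : 'M[R]_(r, N)) (i : 'I_N) : 'cV[R]_r := col i V.

Definition ip (x y : 'cV[R]_r) : R := (x^T *m y) 0 0.

Definition UNTF (V : 'M[R]_(r, N)) : Prop :=
  (forall i, ip (vcol V i) (vcol V i) = 1) /\
  \sum_(i < N) (vcol V i *m (vcol V i)^T) = (N%:R / r%:R) *: 1%:M.

Definition outer_lin_indep (V : 'M[R]_(r, N)) : Prop :=
  forall c : 'I_N -> R,
    \sum_(i < N) c i *: (vcol V i *m (vcol V i)^T) = 0 -> forall i, c i = 0.

(* indices of R^{rN}: index k corresponds to (block i, position a) *)
Definition unindex (k : 'I_(N * r)) : 'I_N * 'I_r :=
  enum_val (cast_ord (esym (mxvec_cast N r)) k).

(* vec(M) = (m_1; ...; m_N) stacking the columns of M *)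
Definition vecm (M : 'M[R]_(r, N)) : 'cV[R]_(N * r) :=
  \col_k M (unindex k).2 (unindex k).1.

Definition Vsym' (V : 'M[R]_(r, N)) (x : 'cV[R]_(N * r)) : Prop :=
  exists S : 'M[R]_r, S^T = S /\
    (forall i, ((vcol V i)^T *m S *m vcol V i) 0 0 = 0) /\
    x = vecm (S *m V).

Definition is_orth_proj (W : 'cV[R]_(N * r) -> Prop) (P : 'M[R]_(N * r)) : Prop :=
  forall x, W (P *m x) /\ (forall w, W w -> (w^T *m (x - P *m x)) 0 0 = 0).

Definition Gram (V : 'M[R]_(r, N)) : 'M[R]_N := V^T *m V.

Definition Pblock (V : 'M[R]_(r, N)) (i j : 'I_N) : 'M[R]_r :=
  let v := vcol V in
  let Y := invmx (map_mx (fun x => x ^+ 2) (Gram V)) in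
  (r%:R / N%:R) *:
    ((2^-1 * ip (v i) (v j)) *: 1%:M + 2^-1 *: (v j *m (v i)^T)
     - \sum_(k < N) \sum_(l < N)
         (Y k l * ip (v i) (v k) * ip (v j) (v l)) *: (v k *m (v l)^T)).

Definition Pmat (V : 'M[R]_(r, N)) : 'M[R]_(N * r) :=
  \matrix_(p, q) Pblock V (unindex p).1 (unindex q).1 (unindex p).2 (unindex q).2.

End Defs.

(* Main.v *)
Require Import Defs.
From HB Require Import structures.
From mathcomp Require Import all_boot all_order all_algebra.
Set Implicit Arguments. Unset Strict Implicit. Unset Printing Implicit Defensive.
Import Order.TTheory GRing.Theory Num.Theory.
Local Open Scope ring_scope.

Section Aux.
Variables (R : realFieldType) (r N : nat).

Definition idx (u : 'I_N * 'I_r) : 'I_(N * r) := cast_ord (mxvec_cast N r) (enum_rank u).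

Lemma unindexK (u : 'I_N * 'I_r) : unindex (idx u) = u.
Proof. by rewrite /unindex /idx cast_ordK enum_rankK. Qed.

Lemma idxK (k : 'I_(N * r)) : idx (unindex k) = k.
Proof. by rewrite /unindex /idx enum_valK cast_ordKV. Qed.

Lemma sum_unindex (F : 'I_N -> 'I_r -> R) :
  \sum_(k < N * r) F (unindex k).1 (unindex k).2 = \sum_(i < N) \sum_(a < r) F i a.
Proof.
rewrite (reindex idx) /=; last by exists (fun k => unindex k) => x _; [exact: unindexK|exact: idxK].
rewrite pair_big /=; apply: eq_bigr => u _; by rewrite unindexK.
Qed.

Lemma vecm_surj (x : 'cV[R]_(N * r)) : exists Y : 'M[R]_(r, N), x = vecm Y.
Proof.
exists (\matrix_(a, i) x (idx (i, a)) 0).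
apply/colP => k; rewrite !mxE; by case: (unindex k) (idxK k) => i a /= ->.
Qed.

Lemma vecm_dot (A B : 'M[R]_(r, N)) : ((vecm A)^T *m vecm B) 0 0 = \tr (A^T *m B).
Proof.
rewrite mxE (eq_bigr (fun k => A (unindex k).2 (unindex k).1 * B (unindex k).2 (unindex k).1)).
  rewrite (sum_unindex (fun i a => A a i * B a i)) /mxtrace; apply: eq_bigr => i _.
  by rewrite mxE; apply: eq_bigr => a _; rewrite mxE.
by move=> k _; rewrite !mxE.
Qed.

Lemma vecmB (A B : 'M[R]_(r, N)) : vecm (A - B) = vecm A - vecm B.
Proof. by apply/colP => k; rewrite !mxE. Qed.

Lemma blockmul (B : 'I_N -> 'I_N -> 'M[R]_r) (Y : 'M[R]_(r, N)) :
  (\matrix_(p, q) B (unindex p).1 (unindex q).1 (unindex p).2 (unindex q).2) *m vecm Y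
  = vecm (\matrix_(a, i) (\sum_(j < N) B i j *m col j Y) a 0).
Proof.
apply/colP => p; rewrite !mxE.
rewrite (eq_bigr (fun q => B (unindex p).1 (unindex q).1 (unindex p).2 (unindex q).2 * Y (unindex q).2 (unindex q).1)); last by move=> q _; rewrite !mxE.
rewrite (sum_unindex (fun j b => B (unindex p).1 j (unindex p).2 b * Y b j)) summxE.
by apply: eq_bigr => j _; rewrite mxE; apply: eq_bigr => b _; rewrite mxE.
Qed.

End Aux.

From mathcomp Require Import ring.

Section Main.
Variables (R : realFieldType) (r N : nat) (V : 'M[R]_(r, N)).
Local Notation v := (vcol V).

Definition G := map_mx (fun x => x ^+ 2) (Gram V).
Definition Gi := invmx G.
Definition Amat (Y : 'M[R]_(r, N)) := 2^-1 *: (Y *m V^T + V *m Y^T).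
Definition qf (A : 'M[R]_r) l := ((v l)^T *m A *m v l) 0 0.
Definition Pi (A : 'M[R]_r) :=
  A - \sum_(k < N) \sum_(l < N) (Gi k l * qf A l) *: (v k *m (v k)^T).

Lemma ipE (x y : 'cV[R]_r) : ip x y = \sum_c x c 0 * y c 0.
Proof. by rewrite /ip mxE; apply: eq_bigr => c _; rewrite mxE. Qed.

Lemma ipC (x y : 'cV[R]_r) : ip x y = ip y x.
Proof. by rewrite !ipE; apply: eq_bigr => c _; rewrite mulrC. Qed.

Lemma outerM (u w z : 'cV[R]_r) : (u *m w^T) *m z = ip w z *: u.
Proof. by rewrite -mulmxA [w^T *m z]mx11_scalar mul_mx_scalar. Qed.

Lemma mul_col_sum m (M : 'M[R]_(m, N)) (w : 'cV[R]_N) :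
  M *m w = \sum_j w j 0 *: col j M.
Proof.
by apply/colP => a; rewrite !mxE summxE; apply: eq_bigr => j _; rewrite !mxE mulrC.
Qed.

Lemma trmul_col (M : 'M[R]_(r, N)) (w : 'cV[R]_r) j : (M^T *m w) j 0 = ip (col j M) w.
Proof. by rewrite ipE mxE; apply: eq_bigr => c _; rewrite !mxE. Qed.

Lemma GramE k l : Gram V k l = ip (v k) (v l).
Proof. by rewrite /Gram ipE mxE; apply: eq_bigr => c _; rewrite !mxE. Qed.

Lemma GE k l : G k l = ip (v k) (v l) ^+ 2.
Proof. by rewrite /G mxE GramE. Qed.

Lemma VVt : V *m V^T = \sum_i v i *m (v i)^T.
Proof.
apply/matrixP => a b; rewrite !mxE summxE; apply: eq_bigr => i _.
by rewrite !mxE big_ord1 !mxE.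
Qed.

Lemma entryZ m n (a : R) (M : 'M[R]_(m, n)) i j : (a *: M) i j = a * M i j.
Proof. by rewrite mxE. Qed.
Lemma entryD m n (M M' : 'M[R]_(m, n)) i j : (M + M') i j = M i j + M' i j.
Proof. by rewrite mxE. Qed.

Lemma entryN m n (M : 'M[R]_(m, n)) i j : (- M) i j = - M i j.
Proof. by rewrite mxE. Qed.

Lemma half_double (x : R) : 2^-1 * (x + x) = x.
Proof. by field. Qed.

Lemma Pblock_mul i j (y : 'cV[R]_r) : Pblock V i j *m y = (r%:R / N%:R) *:
  ((2^-1 * ip (v i) (v j)) *: y + 2^-1 *: (ip (v i) y *: v j)
   - \sum_(k < N) \sum_(l < N) (Gi k l * ip (v i) (v k) * ip (v j) (v l) * ip (v l) y) *: v k).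
Proof.
rewrite /Pblock /= -scalemxAl mulmxBl mulmxDl -!scalemxAl mul1mx outerM mulmx_suml.
congr (_ *: (_ + _ - _)); apply: eq_bigr => k _; rewrite mulmx_suml; apply: eq_bigr => l _.
by rewrite -scalemxAl outerM scalerA.
Qed.

Lemma Amat_mul (Y : 'M[R]_(r, N)) i : Amat Y *m v i =
  2^-1 *: (\sum_j ip (v j) (v i) *: col j Y + \sum_j ip (col j Y) (v i) *: v j).
Proof.
rewrite /Amat -scalemxAl mulmxDl -!mulmxA !mul_col_sum.
by congr (_ *: (_ + _)); apply: eq_bigr => j _; rewrite trmul_col.
Qed.

Lemma qf_Amat (Y : 'M[R]_(r, N)) l :
  qf (Amat Y) l = \sum_j ip (v j) (v l) * ip (v l) (col j Y).
Proof.
rewrite /qf -mulmxA Amat_mul -scalemxAr mulmxDr !mulmx_sumr.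
rewrite entryZ entryD !summxE.
rewrite -[RHS]half_double; congr (_ * (_ + _)); apply: eq_bigr => j _;
  rewrite -scalemxAr entryZ //.
by rewrite mulrC ipC [ip (v j) _]ipC.
Qed.

Lemma col_identity (Y : 'M[R]_(r, N)) i :
  \sum_j Pblock V i j *m col j Y = (r%:R / N%:R) *: (Pi (Amat Y) *m v i).
Proof.
under eq_bigr do rewrite Pblock_mul.
rewrite -scaler_sumr; congr (_ *: _).
rewrite /Pi mulmxBl Amat_mul mulmx_suml sumrB big_split /= scalerDr -!scaler_sumr.
congr (_ + _ - _).
- rewrite scaler_sumr; apply: eq_bigr => j _; by rewrite scalerA ipC.
- by congr (_ *: _); apply: eq_bigr => j _; rewrite ipC.
- under [RHS]eq_bigr do rewrite mulmx_suml.
  rewrite exchange_big /=; apply: eq_bigr => k _.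
  rewrite exchange_big /=; apply: eq_bigr => l _.
  rewrite -scalemxAl outerM scalerA qf_Amat mulr_sumr mulr_suml scaler_suml.
  apply: eq_bigr => j _; congr (_ *: _).
  rewrite [ip (v k) (v i)]ipC; ring.
Qed.

Lemma Pmat_vecm (Y : 'M[R]_(r, N)) :
  Pmat V *m vecm Y = vecm ((r%:R / N%:R) *: (Pi (Amat Y) *m V)).
Proof.
rewrite /Pmat blockmul; congr vecm; apply/matrixP => a i.
rewrite mxE col_identity !entryZ; congr (_ * _).
by rewrite !mxE; apply: eq_bigr => b _; rewrite !mxE.
Qed.

Lemma outer_sym (u : 'cV[R]_r) : (u *m u^T)^T = u *m u^T.
Proof. by rewrite trmx_mul trmxK. Qed.

Lemma Amat_sym (Y : 'M[R]_(r, N)) : (Amat Y)^T = Amat Y.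
Proof. by rewrite /Amat linearZ /= linearD /= !trmx_mul !trmxK addrC. Qed.

Lemma Pi_sym (A : 'M[R]_r) : A^T = A -> (Pi A)^T = Pi A.
Proof.
move=> sA; rewrite /Pi linearB /= sA linear_sum /=; congr (_ - _).
apply: eq_bigr => k _; rewrite linear_sum; apply: eq_bigr => l _.
by rewrite linearZ /= outer_sym.
Qed.

Lemma qfB A B l : qf (A - B) l = qf A l - qf B l.
Proof. by rewrite /qf mulmxBr mulmxBl entryD entryN. Qed.
Lemma qfZ a A l : qf (a *: A) l = a * qf A l.
Proof. by rewrite /qf -scalemxAr -scalemxAl entryZ. Qed.
Lemma qf_sum (F : 'I_N -> 'M[R]_r) l : qf (\sum_k F k) l = \sum_k qf (F k) l.
Proof. by rewrite /qf mulmx_sumr mulmx_suml summxE. Qed.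
Lemma qf_outer k l : qf (v k *m (v k)^T) l = G l k.
Proof. by rewrite /qf -mulmxA outerM -scalemxAr entryZ GE ipC expr2. Qed.

Lemma qf_Pi A i : G \in unitmx -> qf (Pi A) i = 0.
Proof.
move=> uG; rewrite /Pi qfB qf_sum.
under eq_bigr do rewrite qf_sum.
under eq_bigr do under eq_bigr do rewrite qfZ qf_outer.
set q := \col_l qf A l.
have -> : \sum_k \sum_l Gi k l * qf A l * G i k = (G *m (Gi *m q)) i 0.
  rewrite mxE; apply: eq_bigr => k _; rewrite [(Gi *m q) k 0]mxE mulr_sumr; apply: eq_bigr => l _.
  by rewrite /q !mxE; ring.
by rewrite mulmxA mulmxV // mul1mx mxE subrr.
Qed.

Lemma G_unit : outer_lin_indep V -> G \in unitmx.
Proof.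
move=> li; rewrite -row_free_unit -kermx_eq0; apply/eqP/row_matrixP => k; rewrite row0.
have uK : row k (kermx G) *m G = 0 by apply/sub_kermxP; exact: row_sub.
move: uK; set u := row k (kermx G) => uK.
set M := \sum_l u 0 l *: (v l *m (v l)^T).
have qM : forall k', qf M k' = 0.
  move=> k'; rewrite qf_sum; under eq_bigr do rewrite qfZ qf_outer.
  transitivity ((u *m G) 0 k'); last by rewrite uK mxE.
  rewrite mxE.
  by apply: eq_bigr => l _; rewrite !GE ipC.
have sM : M^T = M.
  rewrite /M linear_sum; apply: eq_bigr => l _; by rewrite linearZ /= outer_sym.
have trM : \tr (M *m M) = 0.
  rewrite {1}/M mulmx_suml raddf_sum big1 // => l _.
  rewrite /= -scalemxAl mxtraceZ -mulmxA mxtrace_mulC /mxtrace big_ord1.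
  by have := qM l; rewrite /qf => ->; rewrite mulr0.
have trM2 : \sum_a \sum_b M a b ^+ 2 = 0.
  rewrite -[RHS]trM /mxtrace; apply: eq_bigr => a _; rewrite mxE; apply: eq_bigr => b _.
  have e : M b a = M a b by rewrite -{1}sM mxE.
  by rewrite expr2 e.
have M0 : M = 0.
  apply/matrixP => a b; rewrite [RHS]mxE.
  have ha := psumr_eq0P (P := predT) (fun a _ => sumr_ge0 _ (fun b _ => sqr_ge0 (M a b))) trM2 (i := a) (isT : predT a).
  have hb := psumr_eq0P (P := predT) (fun b _ => sqr_ge0 (M a b)) ha (i := b) (isT : predT b).
  by apply/eqP; rewrite -sqrf_eq0; apply/eqP.
apply/rowP => l; rewrite [RHS]mxE; exact: (li (fun l => u 0 l) M0 l).
Qed.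

Lemma trB (A B : 'M[R]_r) : \tr (A - B) = \tr A - \tr B.
Proof. exact: raddfB. Qed.
Lemma trBN (A B : 'M[R]_N) : \tr (A - B) = \tr A - \tr B.
Proof. exact: raddfB. Qed.
Lemma trS (F : 'I_N -> 'M[R]_r) : \tr (\sum_k F k) = \sum_k \tr (F k).
Proof. exact: raddf_sum. Qed.

Lemma tr_outer (S : 'M[R]_r) k : \tr (S *m (v k *m (v k)^T)) = qf S k.
Proof. by rewrite mulmxA mxtrace_mulC mulmxA /mxtrace big_ord1. Qed.

Lemma orth (S : 'M[R]_r) (Y : 'M[R]_(r, N)) :
  S^T = S -> (forall i, qf S i = 0) ->
  V *m V^T = (N%:R / r%:R) *: 1%:M -> N%:R != 0 :> R -> r%:R != 0 :> R ->
  \tr ((S *m V)^T *m (Y - (r%:R / N%:R) *: (Pi (Amat Y) *m V))) = 0.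
Proof.
move=> sS qS VV hN hr.
have h1 : \tr ((S *m V)^T *m ((r%:R / N%:R) *: (Pi (Amat Y) *m V))) = \tr (S *m Pi (Amat Y)).
  rewrite -scalemxAr mxtraceZ trmx_mul sS !mulmxA mxtrace_mulC !mulmxA -mulmxA VV.
  rewrite -scalemxAl mul1mx mxtraceZ mulrA.
  have -> : r%:R / N%:R * (N%:R / r%:R) = 1 :> R by field; apply/andP.
  by rewrite mul1r.
have h2 : \tr (S *m Pi (Amat Y)) = \tr (S *m Amat Y).
  rewrite /Pi mulmxBr trB mulmx_sumr trS big1 ?subr0 // => k _.
  rewrite mulmx_sumr trS big1 // => l _.
  by rewrite -scalemxAr mxtraceZ tr_outer qS mulr0.
have h3 : \tr (S *m Amat Y) = \tr ((S *m V)^T *m Y).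
  rewrite /Amat -scalemxAr mulmxDr mxtraceZ mxtraceD.
  have e1 : \tr (S *m (Y *m V^T)) = \tr ((S *m V)^T *m Y).
    by rewrite mulmxA mxtrace_mulC trmx_mul sS mulmxA.
  have e2 : \tr (S *m (V *m Y^T)) = \tr ((S *m V)^T *m Y).
    by rewrite mulmxA -mxtrace_tr trmx_mul trmxK mxtrace_mulC.
  by rewrite e1 e2 half_double.
by rewrite mulmxBr trBN h1 h2 h3 subrr.
Qed.

End Main.

Theorem proposition13 (R : realFieldType) (r N : nat) (V : 'M[R]_(r, N)) :
  UNTF V -> outer_lin_indep V ->
  is_orth_proj (Vsym' V) (Pmat V).
Proof.
move=> [hn hS] li x.
have uG := G_unit li.
have [Y ->] := vecm_surj x.
split.
  exists ((r%:R / N%:R) *: Pi V (Amat V Y)); split; first by rewrite linearZ /= Pi_sym // Amat_sym.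
  split; last by rewrite Pmat_vecm scalemxAl.
  move=> i; change (qf V ((r%:R / N%:R) *: Pi V (Amat V Y)) i = 0).
  by rewrite qfZ qf_Pi // mulr0.
move=> w [S [sS [qS ->]]].
rewrite Pmat_vecm -vecmB vecm_dot.
case: (eqVneq N 0%N) => [N0|Nn0].
  by subst N; rewrite /mxtrace big_ord0.
have rn0 : r != 0%N.
  apply/eqP => r0; subst r.
  have pN : (0 < N)%N by rewrite lt0n.
  have := hn (Ordinal pN); rewrite ipE big_ord0 => /eqP.
  by rewrite eq_sym oner_eq0.
apply: orth => //.
- by rewrite VVt.
- by rewrite pnatr_eq0.
- by rewrite pnatr_eq0.
Qed.
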